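(* Let $\ell$ be divisible by $4$, let $\mathcal{X}=(X,X')$, $\mathcal{Y}=(Y,Y')$ be perfect colored matchings (for $r=2$) with $X=(x_0,\dots,x_{\ell/2-1})$, $X'=(x'_0,\dots)$, $Y=(y_0,\dots)$, $Y'=(y'_0,\dots)$, and let $\lambda_x,\lambda_y\in\mathbb{F}_q^*$ satisfy: (B1) $\lambda_x\ne\lambda_y$; (B2) $\mathcal{X}$ and $\mathcal{Y}$ satisfy the pairing condition; (B3) if $\lambda_x=-\lambda_y$, then for every $i\in\{0,\dots,\ell/2-1\}$: if $(x_i,x'_i)=(y_j,y_t)$ then $i\le\ell/4-1$, $j\le\ell/4-1$ and $t>\ell/4-1$; and if $(x_i,x'_i)=(y'_j,y'_t)$ then $i>\ell/4-1$, $j\le\ell/4-1$ and $t>\ell/4-1$. Then the family $\{(A_X(\lambda_x),S_X),(A_{X'}(\lambda_x),S_{X'}),(A_Y(\lambda_y),S_Y),(A_{Y'}(\lambda_y),S_{Y'})\}$ satisfies the subspace condition with $r=2$.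
   Context: Vectors are row vectors and matrices act on the right. Subspace condition for $r,\ell$: a family $\{(A_i,S_i)\}_{i=1}^k$ of invertible $\ell\times\ell$ matrices and $(\ell/r)$-dimensional subspaces satisfies it if (i) $S_i+S_iA_i+\dots+S_iA_i^{r-1}=\mathbb{F}_q^\ell$ for all $i$; (ii) $S_iA_j=S_i$ for all $i\ne j$; (iii) every square block submatrix of the $k\times r$ block matrix with $(i,j)$ block $A_i^j$ ($j=0,\dots,r-1$) is invertible. A perfect colored matching for $r=2$ is a pair $\mathcal{Z}=(Z,Z')$ of ordered sequences $Z=(z_0,\dots,z_{\ell/2-1})$, $Z'=(z'_0,\dots,z'_{\ell/2-1})$ of standard unit vectors of $\mathbb{F}_q^\ell$ whose underlying sets partition $\{e_0,\dots,e_{\ell-1}\}$; its edges are $\{z_i,z'_i\}$. Two matchings satisfy the pairing condition if every edge of each is contained in a single color class ($Z$ or $Z'$) of the other. $A(\lambda)=\mathrm{diag}(A^+(\lambda),-A^+(\lambda))$ where $A^+(\lambda)$ is the $(\ell/2)\times(\ell/2)$ block diagonal matrix with all $2\times2$ blocks $\begin{pmatrix}0&\lambda\\ \lambda&0\end{pmatrix}$. $P_Z$ has rows $z_0,z'_0-z_0,z_1,z'_1-z_1,\dots$ and $P_{Z'}$ has rows $z'_0,z_0+z'_0,z'_1,z_1+z'_1,\dots$; $A_Z(\lambda)=P_Z^{-1}A(\lambda)P_Z$, $A_{Z'}(\lambda)=P_{Z'}^{-1}A(\lambda)P_{Z'}$, $S_Z=\mathrm{span}\{z_i\}$, $S_{Z'}=\mathrm{span}\{z'_i\}$.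 *)

(* Defs.v *)
From HB Require Import structures.
From mathcomp Require Import all_boot all_order all_algebra.
Set Implicit Arguments. Unset Strict Implicit. Unset Printing Implicit Defensive.
Import Order.TTheory GRing.Theory Num.Theory.
Local Open Scope ring_scope.

(* Conventions: the half-length l/2 is called h, so vectors live in F^(h+h).
   Standard unit vectors e_j are indexed by j : 'I_(h+h); a sequence of
   standard unit vectors (z_0,...,z_(h-1)) is encoded by z : 'I_h -> 'I_(h+h). *)

Definition uvec (F : fieldType) (l : nat) (j : 'I_l) : 'rV[F]_l := delta_mx 0 j.

Lemma half_ord_lt (h : nat) (k : 'I_(h + h)) : (k./2 < h)%N.
Proof. by rewrite ltn_half_double -addnn. Qed.

Definition half_ord (h : nat) (k : 'I_(h + h)) : 'I_h := Ordinal (half_ord_lt k).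

Definition perfect_colored_matching (h : nat) (z z' : 'I_h -> 'I_(h + h)) : Prop :=
  [set z i | i : 'I_h] :&: [set z' i | i : 'I_h] = set0 /\
  [set z i | i : 'I_h] :|: [set z' i | i : 'I_h] = setT.

Definition edges_in_classes (h : nat) (z z' w w' : 'I_h -> 'I_(h + h)) : Prop :=
  forall i : 'I_h,
    (z i \in [set w j | j : 'I_h] /\ z' i \in [set w j | j : 'I_h]) \/
    (z i \in [set w' j | j : 'I_h] /\ z' i \in [set w' j | j : 'I_h]).

Definition pairing_condition (h : nat) (x x' y y' : 'I_h -> 'I_(h + h)) : Prop :=
  edges_in_classes x x' y y' /\ edges_in_classes y y' x x'.

(* A^+(lambda): h x h block diagonal with 2x2 blocks [[0, lambda], [lambda, 0]],
   i.e. entries (2a, 2a+1) and (2a+1, 2a) equal lambda, all others 0. *)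
Definition Aplus (F : fieldType) (h : nat) (lam : F) : 'M[F]_h :=
  \matrix_(i, j) (if ((i./2 == j./2)%N && (i != j)) then lam else 0).

Definition Amat (F : fieldType) (h : nat) (lam : F) : 'M[F]_(h + h) :=
  block_mx (Aplus h lam) 0 0 (- Aplus h lam).

Definition PZ (F : fieldType) (h : nat) (z z' : 'I_h -> 'I_(h + h)) : 'M[F]_(h + h) :=
  \matrix_(k < h + h)
    (if odd k then uvec F (z' (half_ord k)) - uvec F (z (half_ord k))
     else uvec F (z (half_ord k))).

Definition PZ' (F : fieldType) (h : nat) (z z' : 'I_h -> 'I_(h + h)) : 'M[F]_(h + h) :=
  \matrix_(k < h + h)
    (if odd k then uvec F (z (half_ord k)) + uvec F (z' (half_ord k))
     else uvec F (z' (half_ord k))).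

Definition AZ (F : fieldType) (h : nat) (lam : F) (z z' : 'I_h -> 'I_(h + h))
  : 'M[F]_(h + h) := invmx (PZ F z z') *m Amat h lam *m PZ F z z'.

Definition AZ' (F : fieldType) (h : nat) (lam : F) (z z' : 'I_h -> 'I_(h + h))
  : 'M[F]_(h + h) := invmx (PZ' F z z') *m Amat h lam *m PZ' F z z'.

Definition SZ (F : fieldType) (h : nat) (z : 'I_h -> 'I_(h + h)) : 'M[F]_(h, h + h) :=
  \matrix_(i < h) uvec F (z i).

(* Subspace condition for r, l.  Subspaces are represented as row spaces of
   matrices S i (with s rows); S A is the row space of S *m A. *)
Definition subspace_condition (F : fieldType) (r l k s : nat)
    (A : 'I_k -> 'M[F]_l) (S : 'I_k -> 'M[F]_(s, l)) : Prop :=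
  [/\ forall i, A i \in unitmx,
      forall i, \rank (S i) = (l %/ r)%N,
      forall i, (\sum_(j < r) <<S i *m A i ^+ j>> == 1%:M)%MS,
      forall i j, i != j -> (S i *m A j == S i)%MS &
      forall (t : nat) (rho : 'I_t -> 'I_k) (gam : 'I_t -> 'I_r),
        (forall a b : 'I_t, (a < b)%N -> (rho a < rho b)%N) ->
        (forall a b : 'I_t, (a < b)%N -> (gam a < gam b)%N) ->
        @mxblock F t t (fun _ => l) (fun _ => l)
          (fun a b => A (rho a) ^+ gam b) \in unitmx].

(* Main.v *)
Require Import Defs.
From HB Require Import structures.
From mathcomp Require Import all_boot all_order all_algebra.
From mathcomp Require Import ring zify.
Set Warnings "-notation-overridden,-ambiguous-paths".
Set Implicit Arguments. Unset Strict Implicit. Unset Printing Implicit Defensive.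
Import Order.TTheory GRing.Theory Num.Theory.
Local Open Scope ring_scope.

Lemma part_eq0 (a b : nat) (i j : bool) :
  ((a == b) && (i + a.*2 != j + b.*2)%N) = (j + b.*2 == if i then (i + a.*2).-1 else (i + a.*2).+1)%N.
Proof. case: i; case: j => /=; apply/idP/idP; lia. Qed.

Lemma part_eq (k l : nat) : ((k./2 == l./2) && (k != l))%N = (l == if odd k then k.-1 else k.+1)%N.
Proof.
have [i [a ->]] : exists (i : bool) a, k = (i + a.*2)%N by exists (odd k), k./2; rewrite odd_double_half.
have [j [b ->]] : exists (j : bool) b, l = (j + b.*2)%N by exists (odd l), l./2; rewrite odd_double_half.
by rewrite !half_bit_double oddD odd_double addbF part_eq0; case: i.
Qed.

Lemma eq_oh (k l : nat) : (k == l) = (odd k == odd l) && (k./2 == l./2).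
Proof.
apply/eqP/andP => [->|[/eqP e1 /eqP e2]]; first by [].
by rewrite -(odd_double_half k) -(odd_double_half l) e1 e2.
Qed.

Section Blk.
Variable F : fieldType.

Lemma unit_cast n1 n2 (e1 e2 : n1 = n2) (A : 'M[F]_n1) :
  (castmx (e1, e2) A \in unitmx) = (A \in unitmx).
Proof.
move: e2; case: n2 / e1 => e2.
by rewrite (eq_irrelevance e2 (erefl n1)) castmx_id.
Qed.

Lemma blk_cast s n (e : s = n) (A : 'M[F]_n) (R : 'M[F]_(n, s)) (C : 'M[F]_(s, n)) (D : 'M[F]_s) :
  (block_mx A R C D \in unitmx) =
  (block_mx A (castmx (erefl, e) R) (castmx (e, erefl) C) (castmx (e, e) D) \in unitmx).
Proof. by move: A R C D; case: n / e => A R C D; rewrite !castmx_id. Qed.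

Variable l : nat.

Lemma blk0 (B : 'I_0 -> 'I_0 -> 'M[F]_l) :
  @mxblock F 0 0 (fun _ => l) (fun _ => l) B \in unitmx.
Proof.
have e : (\sum_(i < 0) l = 0)%N by rewrite big_ord0.
rewrite -(unit_cast e e).
by rewrite unitmxE det_mx00 unitr1.
Qed.

Lemma blk1 (B : 'I_1 -> 'I_1 -> 'M[F]_l) :
  B ord0 ord0 \in unitmx -> @mxblock F 1 1 (fun _ => l) (fun _ => l) B \in unitmx.
Proof.
move=> u.
rewrite (@eq_mxblock _ _ _ _ _ B (fun _ _ => B ord0 ord0)); last by move=> i j; rewrite !ord1.
have e : (\sum_(i < 1) l = l)%N by rewrite big_ord1.
by rewrite -(unit_cast e e) (eq_castmx _ (big_ord1 _ _, big_ord1 _ _)) -mxEmxblock.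
Qed.

Lemma blk2 (B : 'I_2 -> 'I_2 -> 'M[F]_l) :
  block_mx (B 0 0) (B 0 1) (B 1 0) (B 1 1) \in unitmx ->
  @mxblock F 2 2 (fun _ => l) (fun _ => l) B \in unitmx.
Proof.
move=> u; rewrite mxblock_recul unit_cast.
rewrite (blk_cast (big_ord1 _ (fun=> l))).
rewrite (eq_mxrow (B_ := fun _ => B 0 1)); last by move=> j; rewrite ord1; congr (B _ _); apply/val_inj.
rewrite (eq_mxcol (B_ := fun _ => B 1 0)); last by move=> j; rewrite ord1; congr (B _ _); apply/val_inj.
rewrite (eq_mxblock (B_ := fun _ _ => B 1 1)); last by move=> i j; rewrite !ord1; congr (B _ _); apply/val_inj.
by rewrite -mxEmxrow -mxEmxcol (eq_castmx _ (big_ord1 _ _, big_ord1 _ _)) -mxEmxblock.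
Qed.

Lemma blk11 (A B : 'M[F]_l) : B - A \in unitmx -> block_mx 1%:M A 1%:M B \in unitmx.
Proof.
move=> u.
have -> : block_mx 1%:M A 1%:M B = block_mx 1%:M 0 1%:M 1%:M *m block_mx 1%:M A 0 (B - A).
  rewrite mulmx_block !mul1mx !mul0mx ?mulmx0 !addr0 ?add0r ?mulmx1.
  by rewrite addrC subrK.
rewrite unitmx_mul !unitmxE det_lblock det_ublock !det1 !mul1r unitr1 /=.
by rewrite -unitmxE.
Qed.
End Blk.

Section S.
Variable F : finFieldType.
Variable m : nat.
Local Notation h := (2 * m)%N.
Local Notation n := (2 * m + 2 * m)%N.
Implicit Types p q : 'I_h -> 'I_n.

Definition nu (lam : F) (a : 'I_h) : F := if (a < m)%N then lam else - lam.

Definition okm p q := [/\ injective p, injective q, (forall a b, p a != q b) &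
  (forall u, (exists a, p a = u) \/ (exists a, q a = u))].

Lemma okmC p q : okm p q -> okm q p.
Proof.
case=> ip iq d c; split=> // [a b|u]; first by rewrite eq_sym.
by case: (c u) => ?; [right|left].
Qed.

Definition Mg (al lam : F) p q : 'M[F]_n :=
  \matrix_(u, w) \sum_(b < h) nu lam b * ((u == p b)%:R * (w == q b)%:R
     + al * (u == p b)%:R * (w == p b)%:R - al * (u == q b)%:R * (w == q b)%:R).

Lemma sumd (f : 'I_h -> F) a : \sum_b f b * (a == b)%:R = f a.
Proof.
rewrite (bigD1 a) //= eqxx mulr1 big1 ?addr0 // => b nb.
by rewrite eq_sym (negbTE nb) mulr0.
Qed.

Section Ent.
Variables (al lam : F) (p q : 'I_h -> 'I_n).
Hypothesis ok : okm p q.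

Lemma Mg_p a w : Mg al lam p q (p a) w = nu lam a * ((w == q a)%:R + al * (w == p a)%:R).
Proof.
case: ok => ip iq d _.
rewrite mxE -(sumd (fun b => nu lam b * ((w == q b)%:R + al * (w == p b)%:R))).
apply: eq_bigr => b _.
rewrite (inj_eq ip) (negbTE (d a b)); case: (a == b) => /=; ring.
Qed.
Lemma Mg_q a w : Mg al lam p q (q a) w = - al * nu lam a * (w == q a)%:R.
Proof.
case: ok => ip iq d _.
rewrite mxE -(sumd (fun b => - al * nu lam b * (w == q b)%:R)).
apply: eq_bigr => b _.
rewrite (inj_eq iq) [q a == p b]eq_sym (negbTE (d b a)); case: (a == b) => /=; ring.
Qed.
Lemma Mg_cp u a : Mg al lam p q u (p a) = al * nu lam a * (u == p a)%:R.
Proof.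
case: ok => ip iq d _.
rewrite mxE -(sumd (fun b => al * nu lam b * (u == p b)%:R)).
apply: eq_bigr => b _.
rewrite (inj_eq ip) (negbTE (d a b)); case: (a == b) => /=; ring.
Qed.
Lemma Mg_cq u a : Mg al lam p q u (q a) = nu lam a * ((u == p a)%:R - al * (u == q a)%:R).
Proof.
case: ok => ip iq d _.
rewrite mxE -(sumd (fun b => nu lam b * ((u == p b)%:R - al * (u == q b)%:R))).
apply: eq_bigr => b _.
rewrite (inj_eq iq) [q a == p b]eq_sym (negbTE (d b a)); case: (a == b) => /=; ring.
Qed.
End Ent.

Lemma halfh k : ((h + k)./2 = m + k./2)%N.
Proof. by rewrite halfD mul2n odd_double doubleK. Qed.

Lemma Amat_E (lam : F) (k l : 'I_n) : Amat h lam k l =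
  if ((k./2 == l./2) && (k != l :> nat))%N then (if (k < h)%N then lam else - lam) else 0.
Proof.
rewrite /Amat.
case: (splitP k) => [k' ek|k' ek];
  [have -> : k = lshift h k' by apply/val_inj|have -> : k = rshift h k' by apply/val_inj];
case: (splitP l) => [l' el|l' el];
  (try have -> : l = lshift h l' by apply/val_inj);
  (try have -> : l = rshift h l' by apply/val_inj).
- by rewrite block_mxEul mxE /=.
- rewrite (block_mxEur (Aplus h lam)) mxE /= halfh.
  have : (k'./2 < m)%N by rewrite ltn_half_double -mul2n.
  by case: ifP => // /andP [/eqP ->]; lia.
- rewrite (block_mxEdl (Aplus h lam)) mxE /= halfh.
  have : (l'./2 < m)%N by rewrite ltn_half_double -mul2n.
  by case: ifP => // /andP [/eqP <-]; lia.
- rewrite (block_mxEdr (Aplus h lam)) !mxE /= !halfh eqn_add2l eqn_add2l.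
  by case: ifP; rewrite ?oppr0.
Qed.

Lemma pk_lt (k : 'I_n) : ((if odd k then k.-1 else k.+1) < n)%N.
Proof.
have := ltn_ord k; case: ifP => ok; first lia.
move=> kn; rewrite ltn_neqAle kn andbT; apply/eqP => e.
have : odd n by rewrite -e /= ok.
by rewrite oddD !oddM.
Qed.

Definition pk (k : 'I_n) : 'I_n := Ordinal (pk_lt k).

Definition sg (lam : F) (k : 'I_n) : F := if (k < h)%N then lam else - lam.

Lemma Amat_E2 (lam : F) (k l : 'I_n) : Amat h lam k l = sg lam k * (l == pk k)%:R.
Proof.
rewrite Amat_E /sg -val_eqE /= -part_eq.
by case: ifP => _; rewrite ?mulr1 ?mulr0.
Qed.

Lemma pk_half (k : 'I_n) : half_ord (pk k) = half_ord k.
Proof.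
apply/val_inj => /=; have := part_eq k (pk k); rewrite eqxx /=.
by case/andP => /eqP.
Qed.

Lemma pk_odd (k : 'I_n) : odd (pk k) = ~~ odd k.
Proof.
rewrite /=; case: ifP => ok /=; last by rewrite ok.
by case: (nat_of_ord k) ok => //= k0; case: (odd k0).
Qed.


Lemma sumd1 (T : finType) (f : T -> F) c : \sum_u (u == c)%:R * f u = f c.
Proof.
rewrite (bigD1 c) //= eqxx mul1r big1 ?addr0 // => b nb.
by rewrite (negbTE nb) mul0r.
Qed.

Lemma sumd2 (T : finType) (f : T -> F) c1 c2 (al : F) :
  \sum_u ((u == c1)%:R + al * (u == c2)%:R) * f u = f c1 + al * f c2.
Proof.
rewrite (eq_bigr (fun u => (u == c1)%:R * f u + al * ((u == c2)%:R * f u))).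
  by rewrite big_split /= -mulr_sumr !sumd1.
by move=> u _; ring.
Qed.

Definition Pg (al : F) p q : 'M[F]_n := \matrix_(k, w)
  (if odd k then (w == q (half_ord k))%:R + al * (w == p (half_ord k))%:R
   else (w == p (half_ord k))%:R).

Lemma PZ_E z z2 : PZ F z z2 = Pg (-1) z z2.
Proof. by apply/matrixP => k w; rewrite !mxE; case: ifP => _; rewrite !mxE //= mulN1r. Qed.

Lemma PZ'_E z z2 : PZ' F z z2 = Pg 1 z2 z.
Proof. by apply/matrixP => k w; rewrite !mxE; case: ifP => _; rewrite !mxE //= mul1r. Qed.

Lemma sg_nu lam (k : 'I_n) : sg lam k = nu lam (half_ord k).
Proof. by rewrite /sg /nu /= ltn_half_double -mul2n. Qed.

Lemma PM al lam p q : okm p q -> al * al = 1 ->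
  Pg al p q *m Mg al lam p q = Amat h lam *m Pg al p q.
Proof.
move=> ok a2; apply/matrixP => k w; rewrite !mxE.
under eq_bigr => u _ do rewrite mxE.
under [RHS]eq_bigr => u _ do rewrite Amat_E2 mxE.
rewrite [RHS](eq_bigr (fun u => (u == pk k)%:R * (sg lam k * (if odd u then (w == q (half_ord u))%:R + al * (w == p (half_ord u))%:R
      else (w == p (half_ord u))%:R)))); last by move=> u _; ring.
rewrite sumd1 pk_odd pk_half sg_nu.
case ok2: (odd k) => /=.
- rewrite sumd2 Mg_q // Mg_p //.
  have -> : - al * nu lam (half_ord k) * (w == q (half_ord k))%:R +
    al * (nu lam (half_ord k) * ((w == q (half_ord k))%:R + al * (w == p (half_ord k))%:R)) =
    (al * al) * nu lam (half_ord k) * (w == p (half_ord k))%:R by ring.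
  by rewrite a2 mul1r.
- by rewrite sumd1 Mg_p.
Qed.


Lemma Pg_unit al p q : okm p q -> Pg al p q \in unitmx.
Proof.
case=> ip iq d _.
pose Q : 'M[F]_n := \matrix_(u, k) (if odd k then (u == q (half_ord k))%:R
   else (u == p (half_ord k))%:R - al * (u == q (half_ord k))%:R).
suff /mulmx1_unit [] : Pg al p q *m Q = 1%:M by [].
apply/matrixP => k k2; rewrite !mxE.
under eq_bigr => u _ do rewrite mxE.
have -> : (k == k2) = ((odd k == odd k2) && (half_ord k == half_ord k2)).
  by rewrite -val_eqE /= eq_oh.
case: (odd k) => /=; [rewrite sumd2|rewrite sumd1]; rewrite !mxE ?(inj_eq iq) ?(inj_eq ip);
  rewrite ?(negbTE (d _ _)) ?[q _ == p _]eq_sym ?(negbTE (d _ _));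
  case: (odd k2) => /=; case: (half_ord k == half_ord k2) => /=; ring.
Qed.

Lemma AZ_E lam z z2 : okm z z2 -> AZ lam z z2 = Mg (-1) lam z z2.
Proof.
move=> ok; rewrite /AZ PZ_E -mulmxA -PM //; last by rewrite mulrNN mulr1.
by rewrite mulKmx // Pg_unit.
Qed.

Lemma AZ'_E lam z z2 : okm z z2 -> AZ' lam z z2 = Mg 1 lam z2 z.
Proof.
move=> /okmC ok; rewrite /AZ' PZ'_E -mulmxA -PM //; last by rewrite mulr1.
by rewrite mulKmx // Pg_unit.
Qed.

Lemma Mg_tr lam p q : Mg 1 lam q p = (Mg (-1) lam p q)^T.
Proof.
apply/matrixP => u w; rewrite !mxE; apply: eq_bigr => b _; ring.
Qed.


Lemma kerunit (D : 'M[F]_n) : (forall v : 'rV[F]_n, v *m D = 0 -> v = 0) -> D \in unitmx.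
Proof.
move=> H; rewrite -row_free_unit -kermx_eq0; apply/eqP/row_matrixP => i.
by rewrite row0; apply: H; rewrite -row_mul mulmx_ker row0.
Qed.

Section Vec.
Variables (al lam : F) (p q : 'I_h -> 'I_n).
Hypothesis ok : okm p q.

Lemma vMp (v : 'rV[F]_n) a : (v *m Mg al lam p q) 0 (p a) = al * nu lam a * v 0 (p a).
Proof.
rewrite mxE (eq_bigr (fun u => (u == p a)%:R * (al * nu lam a * v 0 u))).
  by rewrite sumd1.
by move=> u _; rewrite Mg_cp //; ring.
Qed.

Lemma vMq (v : 'rV[F]_n) a : (v *m Mg al lam p q) 0 (q a) = nu lam a * (v 0 (p a) - al * v 0 (q a)).
Proof.
rewrite mxE (eq_bigr (fun u => ((u == p a)%:R + (- al) * (u == q a)%:R) * (nu lam a * v 0 u))).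
  by rewrite sumd2; ring.
by move=> u _; rewrite Mg_cq //; ring.
Qed.

Lemma eMp a : uvec F (p a) *m Mg al lam p q = nu lam a *: (uvec F (q a) + al *: uvec F (p a)).
Proof. by apply/rowP => w; rewrite /uvec -rowE [row _ _ 0 w]mxE Mg_p // !mxE. Qed.

Lemma eMq a : uvec F (q a) *m Mg al lam p q = (- al * nu lam a) *: uvec F (q a).
Proof. by apply/rowP => w; rewrite /uvec -rowE [row _ _ 0 w]mxE Mg_q // !mxE. Qed.

Lemma nu_neq0 a : lam != 0 -> nu lam a != 0.
Proof. by rewrite /nu; case: ifP => // _; rewrite oppr_eq0. Qed.

Lemma Mg_unit : lam != 0 -> al != 0 -> Mg al lam p q \in unitmx.
Proof.
move=> l0 a0; apply: kerunit => v E.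
have Hp a : v 0 (p a) = 0.
  have := vMp v a; rewrite E mxE => /esym /eqP; rewrite !mulf_eq0 (negbTE a0) (negbTE (nu_neq0 a l0)) /=.
  by move/eqP.
have Hq a : v 0 (q a) = 0.
  have := vMq v a; rewrite E mxE Hp sub0r => /esym /eqP.
  by rewrite mulf_eq0 (negbTE (nu_neq0 a l0)) /= oppr_eq0 mulf_eq0 (negbTE a0) /= => /eqP.
apply/rowP => u; rewrite mxE; case: ok => _ _ _ /(_ u) [] [a <-]; by rewrite ?Hp ?Hq.
Qed.
End Vec.


Lemma kill (k c : F) : k != 0 -> k * c = 0 -> c = 0.
Proof. by move=> k0 /eqP; rewrite mulf_eq0 (negbTE k0) => /eqP. Qed.

Lemma same_unit lam p q : okm p q -> lam != 0 ->
  Mg 1 lam q p - Mg (-1) lam p q \in unitmx.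
Proof.
move=> ok l0; have ok' := okmC ok; apply: kerunit => v /eqP.
rewrite mulmxBr subr_eq0 => /eqP E.
have Hq a : v 0 (q a) = 0.
  have := vMq 1 lam ok' v a; rewrite E vMp // => e.
  apply: (kill (nu_neq0 a l0)).
  have h1 : nu lam a * v 0 (q a) = nu lam a * (v 0 (q a) - 1 * v 0 (p a)) - (-1 * nu lam a * v 0 (p a)) by ring.
  by rewrite e subrr in h1.
have Hp a : v 0 (p a) = 0.
  have := vMp 1 lam ok' v a; rewrite E vMq // Hq => e.
  apply: (kill (nu_neq0 a l0)).
  have h1 : nu lam a * v 0 (p a) = nu lam a * (v 0 (p a) - -1 * 0) - 1 * nu lam a * 0 by ring.
  by rewrite -e subrr in h1.
apply/rowP => u; rewrite mxE; case: ok => _ _ _ /(_ u) [] [a <-]; by rewrite ?Hp ?Hq.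
Qed.


Lemma alg1 (b : bool) (v mj mt cx cx2 : F) : v - mj != 0 -> v + mt != 0 ->
  - mj * cx = (if b then - v * cx else v * (cx2 - cx)) ->
  - mt * cx2 = (if b then v * (cx + cx2) else v * cx2) -> cx = 0 /\ cx2 = 0.
Proof.
move=> n1 n2; case: b => e1 e2.
- have h1 : (v - mj) * cx = - mj * cx - - v * cx by ring.
  rewrite e1 subrr in h1; have c0 := kill n1 h1; split => //.
  have h2 : (v + mt) * cx2 = v * (cx + cx2) - - mt * cx2 - v * cx by ring.
  by rewrite e2 subrr c0 mulr0 subr0 in h2; apply: kill h2.
- have h2 : (v + mt) * cx2 = v * cx2 - - mt * cx2 by ring.
  rewrite e2 subrr in h2; have c0 := kill n2 h2; split => //.
  have h1 : (v - mj) * cx = - mj * cx - v * (cx2 - cx) + v * cx2 by ring.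
  by rewrite e1 subrr c0 mulr0 addr0 in h1; apply: kill h1.
Qed.

Lemma alg2 (b : bool) (v mj mt cx cx2 : F) : v + mj != 0 -> v - mt != 0 ->
  mj * cx = (if b then - v * cx else v * (cx2 - cx)) ->
  mt * cx2 = (if b then v * (cx + cx2) else v * cx2) -> cx = 0 /\ cx2 = 0.
Proof.
move=> n1 n2; case: b => e1 e2.
- have h1 : (v + mj) * cx = mj * cx - - v * cx by ring.
  rewrite e1 subrr in h1; have c0 := kill n1 h1; split => //.
  have h2 : (v - mt) * cx2 = v * (cx + cx2) - mt * cx2 - v * cx by ring.
  by rewrite e2 subrr c0 mulr0 subr0 in h2; apply: kill h2.
- have h2 : (v - mt) * cx2 = v * cx2 - mt * cx2 by ring.
  rewrite e2 subrr in h2; have c0 := kill n2 h2; split => //.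
  have h1 : (v + mj) * cx = mj * cx - v * (cx2 - cx) + v * cx2 by ring.
  by rewrite e1 subrr c0 mulr0 addr0 in h1; apply: kill h1.
Qed.

Definition Ecl p q (r s : 'I_h -> 'I_n) := forall a, (exists j t, p a = r j /\ q a = r t) \/
  (exists j t, p a = s j /\ q a = s t).

Definition MX (b : bool) lx x x2 := if b then Mg (-1) lx x x2 else Mg 1 lx x2 x.

Lemma cross (b : bool) lx ly x x2 y y2 : okm x x2 -> okm y y2 -> Ecl x x2 y y2 ->
  (forall a j t, x a = y j -> x2 a = y t -> nu lx a - nu ly j != 0 /\ nu lx a + nu ly t != 0) ->
  (forall a j t, x a = y2 j -> x2 a = y2 t -> nu lx a + nu ly j != 0 /\ nu lx a - nu ly t != 0) ->
  Mg (-1) ly y y2 - MX b lx x x2 \in unitmx.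
Proof.
move=> okx oky ecl N1 N2; have okx' := okmC okx.
apply: kerunit => v /eqP; rewrite mulmxBr subr_eq0 => /eqP E.
have EY u : (v *m Mg (-1) ly y y2) 0 u = (v *m MX b lx x x2) 0 u by rewrite E.
have XA a : (v *m MX b lx x x2) 0 (x a) =
   if b then - nu lx a * v 0 (x a) else nu lx a * (v 0 (x2 a) - v 0 (x a)).
  by clear E EY; rewrite /MX; case: b; [rewrite vMp //|rewrite vMq //]; ring.
have XB a : (v *m MX b lx x x2) 0 (x2 a) =
   if b then nu lx a * (v 0 (x a) + v 0 (x2 a)) else nu lx a * v 0 (x2 a).
  by clear E EY XA; rewrite /MX; case: b; [rewrite vMq //|rewrite vMp //]; ring.
have S1 a j t : x a = y j -> x2 a = y t -> v 0 (x a) = 0 /\ v 0 (x2 a) = 0.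
  move=> e1 e2; have [n1 n2] := N1 a j t e1 e2.
  have E1 := EY (x a); have E2 := EY (x2 a).
  rewrite XA {1}e1 vMp // -e1 in E1; rewrite XB {1}e2 vMp // -e2 in E2.
  apply: (alg1 (b := b) n1 n2); [rewrite -E1|rewrite -E2]; ring.
have disj u j t : u = y j -> u = y2 t -> False.
  by move=> -> e; case: oky => _ _ /(_ j t); rewrite e eqxx.
have S2 j : v 0 (y j) = 0.
  case: okx => _ _ _ /(_ (y j)) [] [a ea];
  (case: (ecl a) => [[j' [t [e1 e2]]]|[j' [t [e1 e2]]]]).
  - by have [] := S1 a j' t e1 e2; rewrite -ea.
  - by case: (disj (x a) j j' ea e1).
  - by have [] := S1 a j' t e1 e2; rewrite -ea.
  - by case: (disj (x2 a) j t ea e2).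
have S3 a j t : x a = y2 j -> x2 a = y2 t -> v 0 (x a) = 0 /\ v 0 (x2 a) = 0.
  move=> e1 e2; have [n1 n2] := N2 a j t e1 e2.
  have E1 := EY (x a); have E2 := EY (x2 a).
  rewrite XA {1}e1 vMq // S2 -e1 in E1; rewrite XB {1}e2 vMq // S2 -e2 in E2.
  apply: (alg2 (b := b) n1 n2); [rewrite -E1|rewrite -E2]; ring.
apply/rowP => u; rewrite mxE; case: okx => _ _ _ /(_ u) [] [a <-];
  (case: (ecl a) => [[j [t [e1 e2]]]|[j [t [e1 e2]]]]);
  by [have [] := S1 a j t e1 e2 | have [] := S3 a j t e1 e2].
Qed.


Lemma pcm_okm p q : perfect_colored_matching p q -> okm p q.
Proof.
case=> I U.
have inA a : p a \in [set p i | i : 'I_h] by apply/imsetP; exists a.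
have inB a : q a \in [set q i | i : 'I_h] by apply/imsetP; exists a.
have cA : (#|[set p i | i : 'I_h]| <= h)%N by rewrite (leq_trans (leq_imset_card _ _)) // card_ord.
have cB : (#|[set q i | i : 'I_h]| <= h)%N by rewrite (leq_trans (leq_imset_card _ _)) // card_ord.
have cU := cardsU [set p i | i : 'I_h] [set q i | i : 'I_h].
rewrite U I cards0 subn0 cardsT card_ord in cU.
have eA : #|[set p i | i : 'I_h]| = h by lia.
have eB : #|[set q i | i : 'I_h]| = h by lia.
split.
- move=> a b e; have /imset_injP : #|[set p i | i : 'I_h]| == #|'I_h| by rewrite eA card_ord.
  by move/(_ a b isT isT e).
- move=> a b e; have /imset_injP : #|[set q i | i : 'I_h]| == #|'I_h| by rewrite eB card_ord.
  by move/(_ a b isT isT e).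
- move=> a b; apply/eqP => e.
  have : p a \in [set p i | i : 'I_h] :&: [set q i | i : 'I_h] by rewrite inE inA e inB.
  by rewrite I inE.
- move=> u; have : u \in [set p i | i : 'I_h] :|: [set q i | i : 'I_h] by rewrite U inE.
  by rewrite inE => /orP [/imsetP [a _ ->]|/imsetP [a _ ->]]; [left|right]; exists a.
Qed.


Definition inim (s : 'I_h -> 'I_n) u := exists j, s j = u.

Lemma eic_Ecl p q r s : edges_in_classes p q r s -> Ecl p q r s.
Proof.
move=> E a; case: (E a) => [[/imsetP [j _ e1] /imsetP [t _ e2]]|[/imsetP [j _ e1] /imsetP [t _ e2]]].
  by left; exists j, t.
by right; exists j, t.
Qed.

Lemma ecl_same p q r s : okm r s -> Ecl p q r s -> forall b,
  [/\ inim r (p b) -> inim r (q b), inim r (q b) -> inim r (p b),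
      inim s (p b) -> inim s (q b) & inim s (q b) -> inim s (p b)].
Proof.
case=> _ _ d _ E b; have nrs j t : r j <> s t by move=> e; move: (d j t); rewrite e eqxx.
case: (E b) => [[j [t [e1 e2]]]|[j [t [e1 e2]]]]; split; rewrite /inim;
  try (by exists j); try (by exists t);
  move=> [c ec]; exfalso; rewrite ?e1 ?e2 in ec;
  solve [exact: nrs _ _ ec | exact: nrs _ _ (esym ec)].
Qed.

Lemma SZ_row (s : 'I_h -> 'I_n) a : row a (SZ F s) = uvec F (s a).
Proof. by rewrite /SZ rowK. Qed.

Lemma uvec_sub (s : 'I_h -> 'I_n) a : (uvec F (s a) <= SZ F s)%MS.
Proof. by rewrite -SZ_row row_sub. Qed.

Lemma cond_ii (s : 'I_h -> 'I_n) al lam p q : okm p q -> lam != 0 -> al != 0 ->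
  (forall b, inim s (p b) -> inim s (q b)) -> (SZ F s *m Mg al lam p q == SZ F s)%MS.
Proof.
move=> ok l0 a0 H.
have sub : (SZ F s *m Mg al lam p q <= SZ F s)%MS.
  apply/row_subP => a; rewrite row_mul SZ_row.
  case: (ok) => _ _ _ /(_ (s a)) [] [b e]; rewrite -e.
  - rewrite eMp //; apply: scalemx_sub; apply: addmx_sub; last first.
      by apply: scalemx_sub; rewrite e uvec_sub.
    by have [c <-] := H b (ex_intro _ a (esym e)); rewrite uvec_sub.
  - by rewrite eMq //; apply: scalemx_sub; rewrite e uvec_sub.
apply/andP; split => //.
by rewrite -(mxrank_leqif_sup sub).2 mxrankMfree // row_free_unit Mg_unit.
Qed.

Lemma cond_i al lam p q : okm p q -> lam != 0 ->
  (\sum_(j < 2) <<SZ F p *m Mg al lam p q ^+ j>> == 1%:M)%MS.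
Proof.
move=> ok l0; rewrite !big_ord_recl big_ord0 /=.
apply/andP; split; first exact: submx1.
apply/row_subP => u; rewrite row1.
have Hp a : (uvec F (p a) <= <<SZ F p *m Mg al lam p q ^+ 0>> +
    (<<SZ F p *m Mg al lam p q ^+ 1>> + 0))%MS.
  by apply: submx_trans (addsmxSl _ _); rewrite genmxE expr0 mulmx1 uvec_sub.
case: (ok) => _ _ _ /(_ u) [] [a <-]; first exact: Hp.
have e : uvec F (q a) = (nu lam a)^-1 *: row a (SZ F p *m Mg al lam p q) + (- al) *: uvec F (p a).
  rewrite row_mul SZ_row eMp // scalerA mulVf ?nu_neq0 // scale1r.
  by rewrite scaleNr addrK.
rewrite -[delta_mx 0 (q a)]/(uvec F (q a)) e; apply: addmx_sub; last by apply: scalemx_sub; apply: Hp.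
apply: scalemx_sub; apply: submx_trans (addsmxSr _ _).
apply: submx_trans (addsmxSl _ _).
by rewrite genmxE expr1 row_sub.
Qed.

Lemma rank_SZ (s : 'I_h -> 'I_n) : injective s -> \rank (SZ F s) = h.
Proof.
move=> si; apply/eqP; rewrite eqn_leq rank_leq_row /=.
have e : SZ F s *m (SZ F s)^T = 1%:M.
  apply/matrixP => i j; rewrite !mxE.
  rewrite (eq_bigr (fun u => (u == s i)%:R * (u == s j)%:R)); last by move=> u _; rewrite !mxE.
  by rewrite sumd1 (inj_eq si).
by rewrite -{1}(mxrank1 F h) -e mxrankM_maxl.
Qed.


Ltac nz2 lx :=
  match goal with |- is_true (~~ (?K == _)) =>
    first [have -> : K = lx + lx by ring | have -> : K = -(lx + lx) by ring; rewrite oppr_eq0] end; assumption.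

Lemma NC (lx ly : F) (x x2 y y2 : 'I_h -> 'I_n) : lx != ly ->
  (lx = - ly -> forall i : 'I_h,
     (forall j t : 'I_h, x i = y j -> x2 i = y t -> [/\ (i < m)%N, (j < m)%N & (m <= t)%N]) /\
     (forall j t : 'I_h, x i = y2 j -> x2 i = y2 t -> [/\ (m <= i)%N, (j < m)%N & (m <= t)%N])) ->
  (forall a j t, x a = y j -> x2 a = y t -> nu lx a - nu ly j != 0 /\ nu lx a + nu ly t != 0) /\
  (forall a j t, x a = y2 j -> x2 a = y2 t -> nu lx a + nu ly j != 0 /\ nu lx a - nu ly t != 0).
Proof.
move=> B1 B3.
case: (eqVneq lx (- ly)) => [e|ne].
- have two : lx + lx != 0.
    apply: contra B1; rewrite addr_eq0 => /eqP h.
    by rewrite {1}h e opprK.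
  have ely : ly = - lx by rewrite e opprK.
  split => a j t e1 e2.
  + have [Ha Hj Ht] := (B3 e a).1 j t e1 e2.
    have Ht' : (t < m)%N = false by rewrite ltnNge Ht.
    rewrite /nu Ha Hj Ht' ely; split; nz2 lx.
  + have [Ha Hj Ht] := (B3 e a).2 j t e1 e2.
    have Ht' : (t < m)%N = false by rewrite ltnNge Ht.
    have Ha' : (a < m)%N = false by rewrite ltnNge Ha.
    rewrite /nu Ha' Hj Ht' ely; split; [rewrite (_ : - lx + - lx = - (lx + lx)); last by ring|rewrite (_ : - lx - - - lx = - (lx + lx)); last by ring]; by rewrite oppr_eq0.
- have pm (c1 c2 : bool) : (if c1 then lx else - lx) - (if c2 then ly else - ly) != 0 /\
      (if c1 then lx else - lx) + (if c2 then ly else - ly) != 0.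
    have H1 : lx - ly != 0 by rewrite subr_eq0.
    have H2 : lx + ly != 0 by rewrite addr_eq0.
    case: c1; case: c2; split;
    first [done | rewrite opprK; done | rewrite -opprD oppr_eq0; done
          | rewrite opprK addrC -opprB oppr_eq0; done | rewrite addrC -opprB oppr_eq0; done].
  by split => a j t _ _; rewrite /nu; split; [case: (pm (a < m)%N (j < m)%N)|case: (pm (a < m)%N (t < m)%N)|
     case: (pm (a < m)%N (j < m)%N)|case: (pm (a < m)%N (t < m)%N)].
Qed.

Lemma okm_nin p q b : okm p q -> inim p (q b) -> False.
Proof. by case=> _ _ d _ [c e]; move: (d c b); rewrite e eqxx. Qed.

Lemma okm_nin' p q b : okm p q -> inim q (p b) -> False.
Proof. by case=> _ _ d _ [c e]; move: (d b c); rewrite e eqxx. Qed.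

End S.

Theorem lemma4p5 (F : finFieldType) (m : nat)
    (x x' y y' : 'I_(2 * m) -> 'I_(2 * m + 2 * m)) (lx ly : F) :
  perfect_colored_matching x x' ->
  perfect_colored_matching y y' ->
  lx != 0 -> ly != 0 ->
  (* (B1) *) lx != ly ->
  (* (B2) *) pairing_condition x x' y y' ->
  (* (B3) *)
  (lx = - ly ->
   forall i : 'I_(2 * m),
     (forall j t : 'I_(2 * m), x i = y j -> x' i = y t ->
        [/\ (i < m)%N, (j < m)%N & (m <= t)%N]) /\
     (forall j t : 'I_(2 * m), x i = y' j -> x' i = y' t ->
        [/\ (m <= i)%N, (j < m)%N & (m <= t)%N])) ->
  subspace_condition 2
    (fun k : 'I_4 => nth 0 [:: AZ lx x x'; AZ' lx x x'; AZ ly y y'; AZ' ly y y'] k)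
    (fun k : 'I_4 => nth 0 [:: SZ F x; SZ F x'; SZ F y; SZ F y'] k).
Proof.
move=> Px Py lx0 ly0 B1 [Pxy Pyx] B3.
have okx := pcm_okm Px; have oky := pcm_okm Py.
rewrite (AZ_E lx okx) (AZ'_E lx okx) (AZ_E ly oky) (AZ'_E ly oky).
set As := fun k : 'I_4 => nth 0 [:: Mg (-1) lx x x'; Mg 1 lx x' x; Mg (-1) ly y y'; Mg 1 ly y' y] k.
have n1 : (-1 : F) != 0 by rewrite oppr_eq0 oner_eq0.
have n1' : (1 : F) != 0 by rewrite oner_eq0.
have AU k : As k \in unitmx.
  case: k => [[|[|[|[|k]]]] Hk] //=; apply: Mg_unit => //; exact: okmC.
have [N1 N2] := NC B1 B3.
have trB (A B : 'M[F]_(2 * m + 2 * m)) : (A - B)^T = A^T - B^T by apply/matrixP => i j; rewrite !mxE.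
have ecl := eic_Ecl Pxy.
have PU (i j : 'I_4) : (i < j)%N -> As j - As i \in unitmx.
  case: i => [[|[|[|[|i]]]] Hi] //; case: j => [[|[|[|[|j]]]] Hj] //= _; rewrite /As /=.
  - exact: same_unit.
  - exact: (cross true okx oky ecl N1 N2).
  - rewrite Mg_tr -[Mg (-1) lx x x']trmxK -(Mg_tr lx x x') -trB unitmx_tr.
    exact: (cross false okx oky ecl N1 N2).
  - exact: (cross false okx oky ecl N1 N2).
  - rewrite !Mg_tr -trB unitmx_tr.
    exact: (cross true okx oky ecl N1 N2).
  - exact: same_unit.
have HYX := ecl_same okx (eic_Ecl Pyx).
have HXY := ecl_same oky (eic_Ecl Pxy).
split.
- exact: AU.
- case: (okx) => ix ix' _ _; case: (oky) => iy iy' _ _.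
  case=> [[|[|[|[|k]]]] Hk] //=; rewrite rank_SZ //; lia.
- case=> [[|[|[|[|k]]]] Hk] //=; apply: cond_i => //; exact: okmC.
- case=> [[|[|[|[|i]]]] Hi] //; case=> [[|[|[|[|j]]]] Hj] //= _;
  apply: cond_ii => //; try exact: okmC;
  move=> b; first [ case: (HYX b) => h1 h2 h3 h4; assumption
                  | case: (HXY b) => h1 h2 h3 h4; assumption
                  | by move/(okm_nin okx) | by move/(okm_nin' okx)
                  | by move/(okm_nin oky) | by move/(okm_nin' oky) ].
- move=> t rho gam Hr Hg.
  case: t rho gam Hr Hg => [|[|[|t]]] rho gam Hr Hg.
  + exact: blk0.
  + apply: blk1 => /=.
    by case: (gam ord0) => [[|[|g]] Hg0] //=; rewrite ?expr0 ?expr1 ?unitmx1.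
  + apply: blk2 => /=.
    have g01 := Hg 0 1 isT; have g1 := ltn_ord (gam 1).
    have -> : (gam 0 : nat) = 0%N by lia.
    have -> : (gam 1 : nat) = 1%N by lia.
    rewrite !expr0 !expr1; apply: blk11; exact: PU (Hr 0 1 isT).
  + exfalso.
    have := Hg (inord 0) (inord 1); have := Hg (inord 1) (inord 2).
    have := ltn_ord (gam (inord 2)); rewrite !inordK //; lia.
Qed.
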